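(* Let $X\subset\mathbf P$ be a quasismooth hypersurface defined by $f\in S_\beta$. If $h\in J(f)$ is homogeneous of degree $(d+1)\beta-2\beta_0$, then the Čech cocycle $\left\{\dfrac{h\,c_I^\beta\,\hat x_I\,\Omega}{f_{i_0}\cdots f_{i_d}}\right\}_{I=(i_0,\dots,i_d)}$ in $C^d(\mathcal U,\Omega^d_{\mathbf P})$ is a Čech coboundary. Consequently, the assignment $h\mapsto$ (class of this cocycle) induces a well-defined map $\lambda:R(f)_{(d+1)\beta-2\beta_0}\to H^d(\mathbf P,\Omega^d_{\mathbf P})=H^{d,d}(\mathbf P)$.
   Context: $\mathbf P$ is a complete simplicial toric variety of dimension $d$ with primitive ray generators $e_1,\dots,e_n$, divisors $D_1,\dots,D_n$, homogeneous coordinate ring $S=\mathbb C[x_1,\dots,x_n]$ graded by $A_{d-1}(\mathbf P)$ with $\deg x_i=[D_i]$, $\beta_0=\sum_i\deg x_i$, $f_i=\partial f/\partial x_i$. $X$ quasismooth means the $f_i$ have no common zero on $\mathbf P$; $\mathcal U=\{U_i\}$, $U_i=\{f_i\ne0\}$. $J(f)=\langle f_1,\dots,f_n\rangle$, $R(f)=S/J(f)$. Fix a basis $m_1,\dots,m_d$ of $M$; $\hat x_I=\prod_{i\notin I}x_i$; $\Omega=\sum_{|I|=d}\det(e_I)\hat x_I dx_I$ where $\det(e_I)=\det(\langle m_j,e_{i_k}\rangle)$. For $\beta=[\sum b_iD_i]$ and ordered $I=(i_0,\dots,i_d)$, $c_I^\beta$ is the determinant of the $(d+1)\times(d+1)$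 matrix with first row $(b_{i_0},\dots,b_{i_d})$ and further rows $(\langle m_j,e_{i_0}\rangle,\dots,\langle m_j,e_{i_d}\rangle)$, $j=1,\dots,d$. *)

(* Defs.v *)
From mathcomp Require Import all_boot all_algebra.
From mathcomp Require Import reals.
From mathcomp Require Import complex.
From mathcomp Require Import mpoly.
Set Implicit Arguments. Unset Strict Implicit. Unset Printing Implicit Defensive.
Import GRing.Theory Num.Theory.
Local Open Scope ring_scope.

Section ToricCech.
Variables (R : realType) (d n : nat).
(* e i = coordinates of the primitive ray generator e_i in the basis of N dual
   to the fixed basis m_1..m_d of M, i.e. (e i) 0 j = <m_j, e_i>. *)
Variable e : 'I_n -> 'rV[int]_d.

Definition ray (i : 'I_n) : 'rV[R]_d := map_mx (fun z : int => z%:~R) (e i).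

Definition in_cone (s : {set 'I_n}) (v : 'rV[R]_d) : Prop :=
  exists lam : 'I_n -> R,
    [/\ forall i, 0 <= lam i, forall i, i \notin s -> lam i = 0
      & v = \sum_i lam i *: ray i].

Definition complete_simplicial_fan (Sigma : {set {set 'I_n}}) : Prop :=
  injective e /\
      (forall i, forall k : int, (forall j : 'I_d, (k %| e i ord0 j)%Z) -> `|k| = 1) /\
      (forall i, [set i] \in Sigma) /\
      (forall s t : {set 'I_n}, s \in Sigma -> t \subset s -> t \in Sigma) /\
      (forall s, s \in Sigma -> forall lam : 'I_n -> R,
        (forall i, i \notin s -> lam i = 0) -> \sum_i lam i *: ray i = 0 ->
        forall i, lam i = 0) /\
      (forall s t : {set 'I_n}, s \in Sigma -> t \in Sigma -> forall v,
        in_cone s v -> in_cone t v -> in_cone (s :&: t) v) /\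
      (forall v, exists2 s, s \in Sigma & in_cone s v).

Notation C := (R[i]).
Notation S := {mpoly C[n]}.

Definition pairing (u : 'rV[int]_d) (i : 'I_n) : int := \sum_j u 0 j * e i 0 j.

(* p is homogeneous of degree beta = [sum_i b_i D_i] in A_{d-1}(P):
   every monomial x^a of p has a - b in the image of M -> Z^n *)
Definition is_homog (b : 'I_n -> int) (p : S) : Prop :=
  forall m, m \in msupp p ->
    exists u : 'rV[int]_d, forall i, (m i)%:Z - b i = pairing u i.

(* X = V(f) quasismooth: the partials f_i have no common zero on P,
   i.e. every common zero in C^n lies in the exceptional set Z(Sigma) =
   V(x^_sigma : sigma in Sigma). *)
Definition quasismooth (Sigma : {set {set 'I_n}}) (f : S) : Prop :=
  forall z : 'I_n -> C, (forall i, (mderiv i f).@[z] = 0) ->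
    forall s, s \in Sigma -> \prod_(i | i \notin s) z i = 0.

Definition in_jacobian (f h : S) : Prop :=
  exists g : 'I_n -> S, h = \sum_i g i * mderiv i f.

Definition incr p (I : {ffun 'I_p -> 'I_n}) : Prop :=
  forall a b : 'I_p, (a < b)%N -> (I a < I b)%N.

Definition face (I : {ffun 'I_d.+1 -> 'I_n}) (t : 'I_d.+1) : {ffun 'I_d -> 'I_n} :=
  [ffun k => I (lift t k)].

Definition cI (b : 'I_n -> int) (I : {ffun 'I_d.+1 -> 'I_n}) : int :=
  \det (\matrix_(r < d.+1, c < d.+1)
          if unlift ord0 r is Some j then e (I c) 0 j else b (I c)).

Definition xhat p (I : {ffun 'I_p -> 'I_n}) : S :=
  \prod_(i | i \notin codom I) 'X_i.

Definition fprod p (f : S) (I : {ffun 'I_p -> 'I_n}) : S :=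
  \prod_(t < p) mderiv (I t) f.

(* equality a / g^p = a' / g^p' in the localization S_g *)
Definition loc_eq (g a : S) (p : nat) (a' : S) (p' : nat) : Prop :=
  exists N : nat, g ^+ N * (a * g ^+ p' - a' * g ^+ p) = 0.

(* representative of the degree k * deg(f_J) - beta_0 in Z^n, where
   deg f_j = beta - [D_j] and beta_0 = [sum_i D_i] *)
Definition omega_deg (b : 'I_n -> int) (k : nat) (J : {ffun 'I_d -> 'I_n})
  : 'I_n -> int :=
  fun i => k%:Z * (d%:Z * b i - (\sum_(t < d) (J t == i))%:Z) - 1.

(* The Cech cochain I |-> h c_I^beta \hat x_I Omega / (f_{i_0}...f_{i_d})
   in C^d(U, Omega^d_P) is a coboundary: there is a (d-1)-cochain
   omega_J = G_J Omega / (f_{j_0}...f_{j_{d-1}})^k, with G_J of degree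
   k deg(f_J) - beta_0 (so that omega_J is a section of Omega^d_P over U_J),
   whose Cech differential is that cochain. *)
Definition cech_coboundary (b : 'I_n -> int) (f h : S) : Prop :=
  exists k : nat, exists G : {ffun 'I_d -> 'I_n} -> S,
    (forall J, incr J -> is_homog (omega_deg b k J) (G J)) /\
    forall I : {ffun 'I_d.+1 -> 'I_n}, incr I ->
      loc_eq (fprod f I)
        (\sum_(t < d.+1) (-1) ^+ t * G (face I t) * mderiv (I t) f ^+ k) k
        (h * ((cI b I)%:~R)%:MP * xhat I) 1.

End ToricCech.

(* Main.v *)
Require Import Defs.
From mathcomp Require Import all_boot all_algebra.
From mathcomp Require Import reals.
From mathcomp Require Import complex.
From mathcomp Require Import mpoly.
From Stdlib Require Import ClassicalEpsilon.
From mathcomp Require Import ring zify.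
Set Implicit Arguments. Unset Strict Implicit. Unset Printing Implicit Defensive.
Import GRing.Theory Num.Theory.
Local Open Scope ring_scope.


Ltac dec := match goal with |- context[excluded_middle_informative ?P] =>
  destruct (excluded_middle_informative P) end.

Ltac decn H := match goal with |- context[excluded_middle_informative ?P] =>
  destruct (excluded_middle_informative P) as [H|H] end.

Section Homog.
Variables (R : realType) (d n : nat) (e : 'I_n -> 'rV[int]_d).
Local Notation S := {mpoly R[i][n]}.

Definition inclass (m : 'X_{1..n}) (D : 'I_n -> int) : Prop :=
  exists u : 'rV[int]_d, forall i, (m i)%:Z - D i = pairing e u i.

Lemma pairingD u v i : pairing e (u + v) i = pairing e u i + pairing e v i.
Proof. by rewrite /pairing -big_split; apply: eq_bigr => j _; rewrite mxE mulrDl. Qed.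
Lemma pairingN u i : pairing e (- u) i = - pairing e u i.
Proof. by rewrite /pairing -sumrN; apply: eq_bigr => j _; rewrite mxE mulNr. Qed.
Lemma pairing0 i : pairing e 0 i = 0.
Proof. by rewrite /pairing big1 // => j _; rewrite mxE mul0r. Qed.

Lemma homog_ext (D D' : 'I_n -> int) (p : S) :
  (forall i, D i = D' i) -> is_homog e D p -> is_homog e D' p.
Proof.
move=> DD H m /H [u Hu]; exists u => i; rewrite -DD; exact: Hu.
Qed.

Definition proj (D : 'I_n -> int) (p : S) : S :=
  \sum_(m <- msupp p)
     (if excluded_middle_informative (inclass m D) then p@_m else 0) *: 'X_[m].

Lemma coef_sumX (s : seq 'X_{1..n}) (a : 'X_{1..n} -> R[i]) k :
  uniq s -> (\sum_(m <- s) a m *: 'X_[m] : S)@_k = if k \in s then a k else 0.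
Proof.
move=> us; rewrite raddf_sum /=.
case: ifP => ks.
  rewrite (bigD1_seq k) //= mcoeffZ mcoeffX eqxx mulr1 big1 ?addr0 //.
  by move=> m /negbTE mk; rewrite mcoeffZ mcoeffX mk mulr0.
rewrite big1_seq // => m /andP [_ ms]; rewrite mcoeffZ mcoeffX.
have mk : m != k by apply: contraFneq ks => <-.
by rewrite (negbTE mk) mulr0.
Qed.

Lemma projE D p k :
  (proj D p)@_k = if excluded_middle_informative (inclass k D) then p@_k else 0.
Proof.
rewrite /proj coef_sumX ?msupp_uniq //.
case: ifP => // /negbT /memN_msupp_eq0 ->; by dec.
Qed.

Lemma proj_homog D p : is_homog e D (proj D p).
Proof.
move=> m; rewrite mcoeff_msupp projE.
by dec => //; rewrite eqxx.
Qed.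

Lemma proj_id D p : is_homog e D p -> proj D p = p.
Proof.
move=> H; apply/mpolyP => k; rewrite projE.
dec => //.
case: (boolP (k \in msupp p)) => [/H //|/memN_msupp_eq0 -> //].
Qed.

Lemma projD D p q : proj D (p + q) = proj D p + proj D q.
Proof.
apply/mpolyP => k; rewrite mcoeffD !projE mcoeffD.
by dec; rewrite ?addr0.
Qed.

Lemma projN D p : proj D (- p) = - proj D p.
Proof.
apply/mpolyP => k; rewrite mcoeffN !projE mcoeffN.
by dec; rewrite ?oppr0.
Qed.

Lemma proj0 D : proj D 0 = 0.
Proof. by apply/mpolyP => k; rewrite projE mcoeff0; dec. Qed.

Lemma proj_sum D (I : Type) (r : seq I) (P : pred I) (F : I -> S) :
  proj D (\sum_(i <- r | P i) F i) = \sum_(i <- r | P i) proj D (F i).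
Proof. exact: (big_morph (proj D) (projD D) (proj0 D)). Qed.

Lemma projM D E D' (p q : S) : (forall i, D' i = D i + E i) -> is_homog e E q ->
  proj D p * q = proj D' (p * q).
Proof.
move=> DE Hq; apply/mpolyP => k; rewrite projE !mcoeffM.
decn Hk; last first.
  rewrite big1 // => x /eqP kx; rewrite projE.
  decn H1; last by rewrite mul0r.
  case: (boolP ((x.2 : 'X_{1..n}) \in msupp q)) => [/Hq [v Hv]|/memN_msupp_eq0 ->]; last by rewrite mulr0.
  case: Hk; case: H1 => u Hu; exists (u + v) => i.
  have := congr1 (fun m : 'X_{1..n} => m i) kx; rewrite /= mnmDE => ->.
  by rewrite pairingD -Hu -Hv DE PoszD; ring.
apply: eq_bigr => x /eqP kx; rewrite projE.
decn H1 => //.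
case: (boolP ((x.2 : 'X_{1..n}) \in msupp q)) => [/Hq [v Hv]|/memN_msupp_eq0 ->]; last by rewrite !mulr0.
case: H1; case: Hk => u Hu; exists (u - v) => i.
have := congr1 (fun m : 'X_{1..n} => m i) kx; rewrite /= mnmDE => ki.
rewrite pairingD pairingN -Hu -Hv ki DE PoszD; ring.
Qed.

Lemma homogM D E D' (p q : S) : (forall i, D' i = D i + E i) ->
  is_homog e D p -> is_homog e E q -> is_homog e D' (p * q).
Proof.
move=> DE Hp Hq; rewrite -(proj_id Hp) (projM _ DE Hq); exact: proj_homog.
Qed.

Lemma homogX j : is_homog e (fun i => (j == i)%:R) ('X_j : S).
Proof.
move=> m; rewrite msuppX mem_seq1 => /eqP ->; exists 0 => i.
by rewrite pairing0 mnm1E; case: (j == i).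
Qed.

Lemma homogC c : is_homog e (fun _ => 0) (c%:MP : S).
Proof.
move=> m; rewrite msuppC; case: eqP => // _; rewrite mem_seq1 => /eqP ->.
by exists 0 => i; rewrite pairing0 mnm0E subrr.
Qed.

Lemma homog_prodX (s : seq 'I_n) (P : pred 'I_n) :
  is_homog e (fun k => (\sum_(i <- s | P i) (i == k))%N%:Z) (\prod_(i <- s | P i) 'X_i : S).
Proof.
elim: s => [|a s IH].
  rewrite big_nil -mpolyC1; apply: (homog_ext _ (@homogC 1)) => k; by rewrite big_nil.
rewrite big_cons; case Pa: (P a).
  apply: (homogM _ (@homogX a) IH) => k; rewrite big_cons Pa PoszD; by case: (a == k).
by apply: (homog_ext _ IH) => k; rewrite big_cons Pa.
Qed.

Lemma homog_deriv D (p : S) j : is_homog e D p ->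
  is_homog e (fun i => D i - (j == i)%:R) (mderiv j p).
Proof.
move=> H m; rewrite mcoeff_msupp mcoeff_deriv => nz.
have : (m + U_(j))%MM \in msupp p.
  by rewrite mcoeff_msupp; apply: contraNneq nz => ->; rewrite mul0rn.
move/H => [u Hu]; exists u => i; rewrite -Hu mnmDE mnm1E PoszD; ring.
Qed.

End Homog.


Section Euler.
Variables (R : realType) (d n : nat) (e : 'I_n -> 'rV[int]_d).
Local Notation S := {mpoly R[i][n]}.

Lemma Xderiv i (p : S) :
  'X_i * mderiv i p = \sum_(m <- msupp p) (p@_m * (m i)%:R) *: 'X_[m].
Proof.
rewrite /mderiv mulr_sumr; apply: eq_bigr => m _; rewrite -scalerAr mulrC.
have [->|nz] := eqVneq (m i) 0%N; first by rewrite !mulr0 !scale0r.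
congr (_ *: _); rewrite -mpolyXD; congr 'X_[_]; apply/mnmP => j.
rewrite mnmDE mnmBE mnm1E; case: eqP => [<-|_]; last by rewrite subn0.
by rewrite add1n subn1 prednK // lt0n.
Qed.

Lemma Xderiv_coef i (p : S) k : ('X_i * mderiv i p)@_k = p@_k * (k i)%:R.
Proof.
rewrite Xderiv coef_sumX ?msupp_uniq //.
by case: ifP => // /negbT /memN_msupp_eq0 ->; rewrite mul0r.
Qed.

Lemma euler (b : 'I_n -> int) (f : S) q (K : 'I_q -> 'I_n) (w : 'I_q -> int) :
  is_homog e b f -> (forall j, \sum_s w s * e (K s) 0 j = 0) ->
  \sum_s ('X_(K s) * mderiv (K s) f) *~ w s = f *~ (\sum_s w s * b (K s)).
Proof.
move=> Hf Hw; apply/mpolyP => k; rewrite raddf_sum /= raddfMz /=.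
under eq_bigr => s _ do rewrite raddfMz /= Xderiv_coef.
case: (boolP (k \in msupp f)) => [/Hf [u Hu]|/memN_msupp_eq0 ->]; last first.
  by rewrite mul0rz big1 // => s _; rewrite mul0r mul0rz.
under eq_bigr => s _ do rewrite -mulrzr -mulrA -[(k (K s))%:R]/((k (K s))%:Z%:~R) -intrM.
rewrite -mulr_sumr -rmorph_sum -mulrzr; congr (_ * _%:~R).
have P0 : \sum_s pairing e u (K s) * w s = 0.
  rewrite /pairing; under eq_bigr => s _ do rewrite mulr_suml.
  rewrite exchange_big /=; apply: big1 => j _.
  rewrite -[RHS](mulr0 (u 0 j)) -[in RHS](Hw j) mulr_sumr; apply: eq_bigr => s _; ring.
rewrite -[RHS]addr0 -[X in _ + X]P0 -big_split /=; apply: eq_bigr => s _.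
have -> : Posz (k (K s)) = b (K s) + pairing e u (K s) by rewrite -Hu; ring.
ring.
Qed.

Definition Mrow (b : 'I_n -> int) (r : 'I_d.+1) (i : 'I_n) : int :=
  if unlift ord0 r is Some j then e i 0 j else b i.

Definition faceK (K : 'I_d.+2 -> 'I_n) (s : 'I_d.+2) : {ffun 'I_d.+1 -> 'I_n} :=
  [ffun c => K (lift s c)].

Lemma detrel b (K : 'I_d.+2 -> 'I_n) r :
  \sum_(s < d.+2) (-1) ^+ s * cI e b (faceK K s) * Mrow b r (K s) = 0.
Proof.
pose A : 'M[int]_(d.+2) :=
  \matrix_(r', c) Mrow b (if unlift ord0 r' is Some r'' then r'' else r) (K c).
have : \det A = 0.
  apply: (@determinant_alternate _ _ A ord0 (lift ord0 r)).
    by rewrite neq_lift.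
  by move=> c; rewrite !mxE liftK unlift_none.
rewrite (expand_det_row _ ord0) => H; rewrite -[RHS]H; apply: eq_bigr => s _.
rewrite /cofactor !mxE unlift_none add0n.
suff -> : row' ord0 (col' s A) = \matrix_(a, c) Mrow b a (faceK K s c).
  by rewrite mulrC mulrA.
by apply/matrixP => a c; rewrite !mxE ffunE liftK.
Qed.

End Euler.


Section Spec.
Variables (R : realType) (d n : nat) (e : 'I_n -> 'rV[int]_d).
Local Notation S := {mpoly R[i][n]}.

Definition appf p (J : 'I_p -> 'I_n) (j : 'I_n) (k : 'I_p.+1) : 'I_n :=
  if unlift ord_max k is Some k' then J k' else j.
Definition app p (J : {ffun 'I_p -> 'I_n}) j : {ffun 'I_p.+1 -> 'I_n} :=
  [ffun k => appf J j k].

Lemma appf_lift p (J : 'I_p -> 'I_n) j k : appf J j (lift ord_max k) = J k.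
Proof. by rewrite /appf liftK. Qed.
Lemma appf_max p (J : 'I_p -> 'I_n) j : appf J j ord_max = j.
Proof. by rewrite /appf unlift_none. Qed.

Lemma widen_lift p (t : 'I_p) : widen_ord (leqnSn p) t = lift ord_max t.
Proof. by apply: val_inj => /=; rewrite /bump leqNgt ltn_ord. Qed.

Lemma faceK_max (I : {ffun 'I_d.+1 -> 'I_n}) j : faceK (appf I j) ord_max = I.
Proof. by apply/ffunP => c; rewrite !ffunE appf_lift. Qed.

Lemma faceK_widen (I : {ffun 'I_d.+1 -> 'I_n}) j (t : 'I_d.+1) :
  faceK (appf I j) (widen_ord (leqnSn _) t) = app (face I t) j.
Proof.
apply/ffunP => c; rewrite !ffunE widen_lift.
case: (unliftP ord_max c) => [c'|] ->.
  rewrite appf_lift ffunE.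
  have -> : lift (lift ord_max t) (lift ord_max c') = lift ord_max (lift t c') :> 'I_d.+2.
    apply: val_inj => /=; rewrite /bump.
    have ht := ltn_ord t; have hc := ltn_ord c'.
    have -> : (d.+1 <= t)%N = false by apply/negbTE; rewrite -ltnNge.
    have -> : (d <= c')%N = false by apply/negbTE; rewrite -ltnNge.
    rewrite !add0n.
    have -> : (d.+1 <= (t <= c')%N + c')%N = false.
      by apply/negbTE; rewrite -ltnNge ltnS; case: (t <= c')%N; rewrite ?add1n ?add0n // ltnW.
    by rewrite add0n.
  by rewrite appf_lift.
rewrite appf_max.
have -> : lift (lift ord_max t) (@ord_max d) = ord_max :> 'I_d.+2.
  apply: val_inj => /=; rewrite /bump.
  have ht := ltn_ord t.
  have -> : (d.+1 <= t)%N = false by apply/negbTE; rewrite -ltnNge.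
  by rewrite add0n -ltnS ht.
by rewrite appf_max.
Qed.

Definition cz (b : 'I_n -> int) (T : {ffun 'I_d.+1 -> 'I_n}) : S := (cI e b T)%:~R.

Lemma eulerI b (f : S) (I : {ffun 'I_d.+1 -> 'I_n}) j : is_homog e b f ->
  \sum_(t < d.+1) (-1) ^+ t * cz b (app (face I t) j) * ('X_(I t) * mderiv (I t) f)
  + (-1) ^+ d.+1 * cz b I * ('X_j * mderiv j f) = 0.
Proof.
move=> Hf; set K := appf I j.
have Hw : forall j' : 'I_d, \sum_(s < d.+2) ((-1) ^+ s * cI e b (faceK K s)) * e (K s) 0 j' = 0.
  by move=> j'; have := detrel e b K (lift ord0 j'); rewrite /Mrow liftK.
have Hb : \sum_(s < d.+2) ((-1) ^+ s * cI e b (faceK K s)) * b (K s) = 0.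
  by have := detrel e b K ord0; rewrite /Mrow unlift_none.
have := euler Hf Hw; rewrite Hb mulr0z big_ord_recr /= /K.
under eq_bigr => t _ do rewrite faceK_widen widen_lift appf_lift -mulrzl intrM intr_sign.
by rewrite faceK_max appf_max -mulrzl intrM intr_sign.
Qed.

Lemma xhat_step p q (A : {ffun 'I_p -> 'I_n}) (B : {ffun 'I_q -> 'I_n}) x :
  (forall i, (i \in codom B) = (i == x) || (i \in codom A)) -> x \notin codom A ->
  'X_x * xhat R B = xhat R A.
Proof.
move=> HB xA; rewrite /xhat [RHS](bigD1 x) //=; congr (_ * _).
by apply: eq_bigl => i; rewrite HB negb_or andbC.
Qed.

Lemma cod_app p (J : {ffun 'I_p -> 'I_n}) j i :
  (i \in codom (app J j)) = (i == j) || (i \in codom J).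
Proof.
apply/codomP/orP.
  case=> k; rewrite ffunE /appf; case: (unliftP ord_max k) => [k'|] _ ->.
    by right; apply/codomP; exists k'.
  by left.
case => [/eqP ->|/codomP [k ->]].
  by exists ord_max; rewrite ffunE appf_max.
by exists (lift ord_max k); rewrite ffunE appf_lift.
Qed.

Lemma cod_face (I : {ffun 'I_d.+1 -> 'I_n}) t i :
  (i \in codom I) = (i == I t) || (i \in codom (face I t)).
Proof.
apply/codomP/orP.
  case=> k ->; case: (unliftP t k) => [k'|] ->.
    by right; apply/codomP; exists k'; rewrite ffunE.
  by left.
case => [/eqP ->|/codomP [k ->]].
  by exists t.
by exists (lift t k); rewrite ffunE.
Qed.

Lemma notin_face (I : {ffun 'I_d.+1 -> 'I_n}) t :
  injective I -> I t \notin codom (face I t).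
Proof.
move=> Iinj; apply/codomP => [[k]]; rewrite ffunE => /Iinj /eqP.
by rewrite (negbTE (neq_lift _ _)).
Qed.

Lemma cI_noninj b (T : {ffun 'I_d.+1 -> 'I_n}) a c :
  a != c -> T a = T c -> cI e b T = 0.
Proof.
move=> ac Tac; rewrite /cI -det_tr.
by apply: (determinant_alternate ac) => r; rewrite !mxE Tac.
Qed.

Lemma cI_app_in b (J : {ffun 'I_d -> 'I_n}) j : j \in codom J -> cI e b (app J j) = 0.
Proof.
case/codomP => k ->; apply: (@cI_noninj _ _ (lift ord_max k) ord_max).
  by rewrite eq_sym neq_lift.
by rewrite !ffunE appf_lift appf_max.
Qed.

Lemma X_neq0 j : ('X_j : S) != 0.
Proof.
apply/negP => /eqP H; have := congr1 (mcoeff U_(j)) H.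
by rewrite mcoeffX eqxx mcoeff0 => /eqP; rewrite oner_eq0.
Qed.

Lemma cancel_j b (f : S) (I : {ffun 'I_d.+1 -> 'I_n}) j :
  is_homog e b f -> injective I ->
  \sum_(t < d.+1) (-1) ^+ t * cz b (app (face I t) j) * xhat R (app (face I t) j)
      * mderiv (I t) f
  = (-1) ^+ d * cz b I * xhat R I * mderiv j f.
Proof.
move=> Hf Iinj; apply: (mulfI (X_neq0 j)); rewrite mulr_sumr.
have step : forall t : 'I_d.+1,
  'X_j * ((-1) ^+ t * cz b (app (face I t) j) * xhat R (app (face I t) j)
      * mderiv (I t) f) =
  xhat R I * ((-1) ^+ t * cz b (app (face I t) j) * ('X_(I t) * mderiv (I t) f)).
  move=> t; case: (boolP (j \in codom (face I t))) => [jin|jnot].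
    by rewrite /cz (cI_app_in b jin) !(mulr0, mul0r).
  have h1 : 'X_j * xhat R (app (face I t) j) = xhat R (face I t).
    exact: xhat_step (cod_app _ _) jnot.
  have h2 : 'X_(I t) * xhat R I = xhat R (face I t).
    exact: xhat_step (fun i => cod_face I t i) (notin_face t Iinj).
  transitivity ((-1) ^+ t * cz b (app (face I t) j) * ('X_j * xhat R (app (face I t) j))
      * mderiv (I t) f); first by ring.
  rewrite h1 -h2; ring.
under eq_bigr => t _ do rewrite step.
rewrite -mulr_sumr.
have := eulerI I j Hf; move/eqP; rewrite addr_eq0 => /eqP ->.
rewrite exprS; ring.
Qed.

Definition Graw b (g : 'I_n -> S) (J : {ffun 'I_d -> 'I_n}) : S :=
  \sum_j (-1) ^+ d * cz b (app J j) * xhat R (app J j) * g j.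

Lemma main_id b (f h : S) (g : 'I_n -> S) (I : {ffun 'I_d.+1 -> 'I_n}) :
  is_homog e b f -> injective I -> h = \sum_j g j * mderiv j f ->
  \sum_(t < d.+1) (-1) ^+ t * (Graw b g (face I t) * mderiv (I t) f)
  = h * cz b I * xhat R I.
Proof.
move=> Hf Iinj Hh.
transitivity (\sum_j (-1) ^+ d * g j * \sum_(t < d.+1) (-1) ^+ t
   * cz b (app (face I t) j) * xhat R (app (face I t) j) * mderiv (I t) f).
  rewrite /Graw; under eq_bigr => t _ do rewrite mulr_suml mulr_sumr.
  rewrite exchange_big /=; apply: eq_bigr => j _; rewrite mulr_sumr.
  by apply: eq_bigr => t _; ring.
under eq_bigr => j _ do rewrite cancel_j //.
rewrite Hh !mulr_suml; apply: eq_bigr => j _.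
transitivity ((-1) ^+ d * ((-1) ^+ d * (g j * mderiv j f * cz b I * xhat R I))).
  by ring.
by rewrite signrMK.
Qed.

End Spec.


Lemma arith (B : int) (dd a : nat) (c kin : bool) : (a + c)%N = kin ->
  (dd.+1)%:Z * B - 2 + 0 + (~~ kin : nat)%:Z = 1 * (dd%:Z * B - a%:Z) - 1 + (B - (c : nat)%:R).
Proof.
move=> H; rewrite -addn1 PoszD mulrDl mul1r; set X := (dd%:Z * B).
case: kin H; case: c => /= H; lia.
Qed.

Lemma sum_ind n (P : pred 'I_n) k : (\sum_(i | P i) (i == k))%N = P k.
Proof.
rewrite big_mkcond /= (bigD1 k) //= eqxx big1 ?addn0; first by case: (P k).
by move=> i ik; rewrite (negbTE ik); case: (P i).
Qed.

Lemma sum_inj n p (I : {ffun 'I_p -> 'I_n}) k : injective I ->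
  (\sum_c (I c == k))%N = (k \in codom I).
Proof.
move=> Iinj; case: (boolP (k \in codom I)) => [/codomP [c0 ->]| kn].
  rewrite (bigD1 c0) //= eqxx big1 ?addn0 // => c cc0.
  by have /negbTE -> : I c != I c0 by apply: contra cc0 => /eqP /Iinj ->.
rewrite big1 // => c _.
by have /negbTE -> : I c != k by apply: contra kn => /eqP <-; exact: codom_f.
Qed.

Lemma sum_face n d (I : {ffun 'I_d.+1 -> 'I_n}) t k :
  ((\sum_(c < d) (face I t c == k)) + (I t == k))%N = (\sum_(c < d.+1) (I c == k))%N.
Proof.
rewrite [RHS](bigD1_ord t) //= addnC; congr (_ + _)%N.
by apply: eq_bigr => c _; rewrite ffunE.
Qed.

Lemma proj_sign (R : realType) d n (e : 'I_n -> 'rV[int]_d) D (t : nat) (p : {mpoly R[i][n]}) :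
  (-1) ^+ t * proj e D p = proj e D ((-1) ^+ t * p).
Proof.
by rewrite -signr_odd; case: (odd t); rewrite ?expr1 ?expr0 ?mulN1r ?mul1r ?projN.
Qed.

Unset Implicit Arguments.

Theorem mainTheorem10 (R : realType) (d n : nat) (e : 'I_n -> 'rV[int]_d)
  (Sigma : {set {set 'I_n}}) (b : 'I_n -> int) (f h : {mpoly R[i][n]}) :
  complete_simplicial_fan R e Sigma ->
  f != 0 -> is_homog e b f -> quasismooth Sigma f ->
  in_jacobian f h -> is_homog e (fun i => (d.+1)%:Z * b i - 2) h ->
  cech_coboundary e b f h.
Proof.
move=> _ _ Hf _ [g Hh] Hhh.
exists 1%N, (fun J => proj e (omega_deg b 1 J) (Graw e b g J)).
split; first by move=> J _; exact: proj_homog.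
move=> I HI.
have Iinj : injective I.
  move=> a c Eac; case: (ltngtP a c) => h1; try exact: val_inj; have := HI _ _ h1; by rewrite Eac ltnn.
pose E := fun k => ((d.+1)%:Z * b k - 2 + 0) +
   ((\sum_(i | i \notin codom I) (i == k))%N)%:Z.
have Hx : is_homog e (fun k => ((\sum_(i | i \notin codom I) (i == k))%N)%:Z) (xhat R I).
  exact: (homog_prodX e).
have Hc : is_homog e (fun=> 0) (((cI e b I)%:~R)%:MP : {mpoly R[i][n]}).
  exact: (homogC e).
have Hhom : is_homog e E (h * ((cI e b I)%:~R)%:MP * xhat R I).
  apply: (homogM _ (homogM _ Hhh Hc) Hx) => k //.
exists 0%N; rewrite expr0 mul1r expr1; apply/eqP; rewrite subr_eq0; apply/eqP.
congr (_ * _).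
rewrite -[RHS](proj_id Hhom).
have -> : ((cI e b I)%:~R)%:MP = cz R e b I by rewrite /cz rmorph_int.
rewrite -(main_id Hf Iinj Hh) proj_sum; apply: eq_bigr => t _; rewrite expr1.
have Hd : is_homog e (fun i => b i - (I t == i)%:R) (mderiv (I t) f) := homog_deriv Hf.
have key : proj e (omega_deg b 1 (face I t)) (Graw e b g (face I t)) * mderiv (I t) f
    = proj e E (Graw e b g (face I t) * mderiv (I t) f).
  apply: (projM _ _ Hd) => k.
  rewrite /E /omega_deg sum_ind; apply: arith; rewrite sum_face sum_inj //.
by rewrite -mulrA key proj_sign.
Qed.
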